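(* Let $(X,d)$ be an ultrametric space such that for some $\varepsilon>0$ all balls of radius $\varepsilon$ are compact, and let $f:X\to X$ be an invertible uniformly continuous map. (i) If $f^{-1}$ is an eventually $1$-Lipschitz map, then $f$ has the shadowing property. (ii) If $f^{-1}$ is uniformly continuous and $f$ is an eventual similarity, then $f$ has the shadowing property.
   Context: An ultrametric space satisfies $d(x,z)\le\max\{d(x,y),d(y,z)\}$. A map $g$ is eventually Lipschitz $L$ if there is $\varepsilon>0$ with $d(g(x),g(y))\le L\,d(x,y)$ whenever $d(x,y)<\varepsilon$. $f$ is an eventual similarity if there are $\varepsilon>0$ and $s>0$ with $d(f(x),f(y))=s\,d(x,y)$ whenever $d(x,y)<\varepsilon$. Shadowing property: for every $\varepsilon>0$ there is $\delta>0$ such that every sequence $(x_n)_{n\in\mathbb{N}}$ with $d(f(x_n),x_{n+1})<\delta$ for all $n$ admits $x$ with $d(f^n(x),x_n)<\varepsilon$ for all $n$. *)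

(* Defs.v *)
From Stdlib Require Import Reals.
Open Scope R_scope.

Definition is_ultrametric {X : Type} (d : X -> X -> R) : Prop :=
  (forall x y, 0 <= d x y) /\
  (forall x y, d x y = 0 <-> x = y) /\
  (forall x y, d x y = d y x) /\
  (forall x y z, d x z <= Rmax (d x y) (d y z)).

Definition d_open {X : Type} (d : X -> X -> R) (U : X -> Prop) : Prop :=
  forall x, U x -> exists r, 0 < r /\ forall y, d x y < r -> U y.

Definition d_compact {X : Type} (d : X -> X -> R) (K : X -> Prop) : Prop :=
  forall (I : Type) (U : I -> X -> Prop),
    (forall i, d_open d (U i)) ->
    (forall x, K x -> exists i, U i x) ->
    exists l : list I, forall x, K x -> exists i, List.In i l /\ U i x.

Definition cball {X : Type} (d : X -> X -> R) (x : X) (r : R) : X -> Prop :=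
  fun y => d x y <= r.

Definition unif_continuous {X : Type} (d : X -> X -> R) (f : X -> X) : Prop :=
  forall e, 0 < e -> exists delta, 0 < delta /\
    forall x y, d x y < delta -> d (f x) (f y) < e.

Definition eventually_lipschitz {X : Type} (d : X -> X -> R) (g : X -> X) (L : R) : Prop :=
  exists e, 0 < e /\ forall x y, d x y < e -> d (g x) (g y) <= L * d x y.

Definition eventual_similarity {X : Type} (d : X -> X -> R) (f : X -> X) : Prop :=
  exists e s, 0 < e /\ 0 < s /\ forall x y, d x y < e -> d (f x) (f y) = s * d x y.

Definition shadowing {X : Type} (d : X -> X -> R) (f : X -> X) : Prop :=
  forall e, 0 < e -> exists delta, 0 < delta /\
    forall xs : nat -> X, (forall n, d (f (xs n)) (xs (S n)) < delta) ->
      exists x, forall n, d (Nat.iter n f x) (xs n) < e.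

(* Main.v *)
Require Import Defs.
From Stdlib Require Import Reals Lra Lia Classical List Arith.
Open Scope R_scope.

Section S.
Variable X : Type.
Variable d : X -> X -> R.

Lemma ult_lt (Hu : is_ultrametric d) x y z r :
  d x y < r -> d y z < r -> d x z < r.
Proof.
  destruct Hu as (_ & _ & _ & Hu). intros. eapply Rle_lt_trans; [apply (Hu x y z)|].
  apply Rmax_lub_lt; auto.
Qed.

Lemma d_self (Hu : is_ultrametric d) x : d x x = 0.
Proof. destruct Hu as (_ & H & _). apply H; auto. Qed.

Lemma d_sym (Hu : is_ultrametric d) x y : d x y = d y x.
Proof. destruct Hu as (_ & _ & H & _). auto. Qed.

Lemma d_pos (Hu : is_ultrametric d) x y : 0 <= d x y.
Proof. destruct Hu as (H & _). auto. Qed.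

Lemma fold_max_in (l : list (X * R * nat)) i :
  In i l -> (snd i <= fold_right (fun j m => Nat.max (snd j) m) 0%nat l)%nat.
Proof.
  induction l as [|a l IH]; simpl; [tauto|]. intros [->|H]; [lia|].
  specialize (IH H). lia.
Qed.

Lemma cluster (Hu : is_ultrametric d) K (ys : nat -> X) :
  d_compact d K -> (forall N, K (ys N)) ->
  exists y, forall r, 0 < r -> forall M, exists N, (M <= N)%nat /\ d (ys N) y < r.
Proof.
  intros HK Hys.
  destruct (classic (exists y, forall r, 0 < r -> forall M, exists N, (M <= N)%nat /\ d (ys N) y < r)) as [H|H]; auto.
  exfalso.
  set (U := fun (i : X * R * nat) z =>
    let '(y, r, M) := i in
    0 < r /\ (forall N, (M <= N)%nat -> r <= d (ys N) y) /\ d y z < r).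
  destruct (HK (X * R * nat)%type U) as [l Hl].
  - intros [[y r] M] z Hz. simpl in Hz. destruct Hz as (Hr & HN & Hyz).
    exists (r - d y z). split; [lra|]. intros w Hw. simpl. split; [auto|split; [auto|]].
    apply (ult_lt Hu y z w); auto. pose proof (d_pos Hu y z). lra.
  - intros x _. apply NNPP. intro Hn. apply H. exists x. intros r Hr M.
    apply NNPP. intro Hn2. apply Hn. exists (x, r, M). simpl.
    split; [auto|split].
    + intros N HN. apply Rnot_lt_le. intro Hc. apply Hn2. exists N. auto.
    + rewrite d_self; auto.
  - set (M := fold_right (fun j m => Nat.max (snd j) m) 0%nat l).
    destruct (Hl (ys M) (Hys M)) as [i [Hi HU]].
    pose proof (fold_max_in l i Hi) as HM. fold M in HM.
    destruct i as [[y r] Mi]. simpl in HU, HM. destruct HU as (Hr & HN & Hyz).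
    specialize (HN M HM). rewrite d_sym in HN; auto. lra.
Qed.

Lemma iter_uc (f : X -> X) : unif_continuous d f -> forall n e, 0 < e ->
  exists rho, 0 < rho /\ forall x y, d x y < rho -> d (Nat.iter n f x) (Nat.iter n f y) < e.
Proof.
  intros Hf n. induction n as [|n IH]; intros e He.
  - exists e. simpl. auto.
  - destruct (Hf e He) as [de [Hde Hd]]. destruct (IH de Hde) as [rho [Hr Hrho]].
    exists rho. split; auto. intros. simpl. apply Hd. auto.
Qed.

Lemma iter_inv (f finv : X -> X) : (forall x, f (finv x) = x) ->
  forall n w, Nat.iter n f (Nat.iter n finv w) = w.
Proof.
  intros H n. induction n as [|n IH]; intro w; [reflexivity|].
  rewrite (Nat.iter_succ_r n _ f).
  change (Nat.iter (S n) finv w) with (finv (Nat.iter n finv w)).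
  rewrite H. apply IH.
Qed.

Lemma shadow_i (f finv : X -> X) :
  is_ultrametric d ->
  (exists e, 0 < e /\ forall x, d_compact d (cball d x e)) ->
  (forall x, finv (f x) = x) -> (forall x, f (finv x) = x) ->
  unif_continuous d f -> eventually_lipschitz d finv 1 -> shadowing d f.
Proof.
  intros Hu [ec [Hec Hc]] H1 H2 Hf [eta [Heta Hl]] eps Heps.
  set (dl := Rmin eps (Rmin ec eta)).
  assert (Hd1 : dl <= eps) by apply Rmin_l.
  assert (Hd2 : dl <= ec) by (unfold dl; pose proof (Rmin_r eps (Rmin ec eta)); pose proof (Rmin_l ec eta); lra).
  assert (Hd3 : dl <= eta) by (unfold dl; pose proof (Rmin_r eps (Rmin ec eta)); pose proof (Rmin_r ec eta); lra).
  assert (Hdp : 0 < dl) by (unfold dl; repeat apply Rmin_glb_lt; auto).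
  exists dl. split; auto. intros xs Hxs.
  assert (C : forall k n, d (Nat.iter k finv (xs (k + n)%nat)) (xs n) < dl).
  { intro k. induction k as [|k IH]; intro n.
    - simpl. rewrite d_self; auto.
    - specialize (IH (S n)). rewrite <- plus_n_Sm in IH.
      change (Nat.iter (S k) finv (xs (S k + n)%nat)) with (finv (Nat.iter k finv (xs (S (k + n))))).
      set (z := Nat.iter k finv (xs (S (k + n)))) in *.
      apply (ult_lt Hu _ (finv (xs (S n)))).
      + eapply Rle_lt_trans; [apply Hl; lra|]. lra.
      + rewrite <- (H1 (xs n)). eapply Rle_lt_trans; [apply Hl|].
        * rewrite d_sym; auto. specialize (Hxs n). lra.
        * rewrite d_sym; auto. specialize (Hxs n). lra. }
  set (ys := fun N => Nat.iter N finv (xs N)).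
  destruct (cluster Hu (cball d (xs 0%nat) ec) ys (Hc (xs 0%nat))) as [y Hy].
  { intro N. unfold cball, ys. specialize (C N 0%nat). rewrite Nat.add_0_r in C.
    rewrite d_sym; auto. lra. }
  exists y. intro n.
  destruct (iter_uc f Hf n dl Hdp) as [rho [Hrho Hr]].
  destruct (Hy rho Hrho n) as [N [HN HyN]].
  destruct (Nat.le_exists_sub n N HN) as [k [-> _]].
  specialize (Hr _ _ HyN). unfold ys in Hr.
  rewrite Nat.add_comm in Hr. rewrite Nat.iter_add in Hr. rewrite iter_inv in Hr; auto.
  specialize (C k n). rewrite (Nat.add_comm k n) in C.
  apply (ult_lt Hu _ (Nat.iter k finv (xs (n + k)%nat))).
  - rewrite d_sym; auto. lra.
  - lra.
Qed.

End S.

Theorem corollary5p4 (X : Type) (d : X -> X -> R) (f finv : X -> X) :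
  is_ultrametric d ->
  (exists e, 0 < e /\ forall x, d_compact d (cball d x e)) ->
  (forall x, finv (f x) = x) -> (forall x, f (finv x) = x) ->
  unif_continuous d f ->
  (eventually_lipschitz d finv 1 -> shadowing d f) /\
  (unif_continuous d finv -> eventual_similarity d f -> shadowing d f).
Proof.
  intros Hu Hc H1 H2 Hf. split.
  - apply shadow_i; auto.
  - intros Hfi [e [s [He [Hs Hsim]]]].
    destruct (Rlt_or_le s 1) as [Hs1|Hs1].
    + intros eps Heps. set (dl := Rmin eps e).
      assert (Hd1 : dl <= eps) by apply Rmin_l.
      assert (Hd2 : dl <= e) by apply Rmin_r.
      assert (Hdp : 0 < dl) by (apply Rmin_glb_lt; auto).
      exists dl. split; auto. intros xs Hxs. exists (xs 0%nat).
      enough (Hn : forall n, d (Nat.iter n f (xs 0%nat)) (xs n) < dl).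
      { intro n. specialize (Hn n). lra. }
      intro n. induction n as [|n IH].
      * simpl. rewrite (d_self X d); auto.
      * simpl. apply (ult_lt X d Hu _ (f (xs n))); [|apply Hxs].
        rewrite Hsim by lra. pose proof (d_pos X d Hu (Nat.iter n f (xs 0%nat)) (xs n)). nra.
    + apply (shadow_i X d f finv); auto.
      destruct (Hfi e He) as [dl [Hdl Hd]]. exists dl. split; auto.
      intros x y Hxy. specialize (Hd x y Hxy). specialize (Hsim _ _ Hd).
      rewrite !H2 in Hsim. pose proof (d_pos X d Hu (finv x) (finv y)). nra.
Qed.
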